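(* Let $(Q,P)$ be a weakly quasi-lattice ordered group and let $\Lambda$ be a $P$-graph with $\mathrm{FA}(\Lambda)\neq\emptyset$. Then the path space $\mathcal{X}(\Lambda)$ and the boundary-path space $\partial\mathcal{X}(\Lambda)$ are Hausdorff and each has a countable basis consisting of compact sets. Moreover, $\mathcal{X}(\Lambda)$ is open in $\mathcal{F}(\Lambda)$.
   Context: A weakly quasi-lattice ordered group $(Q,P)$ consists of a discrete group $Q$ and a subsemigroup $P\subseteq Q$ containing the identity $e$ with $P\cap P^{-1}=\{e\}$, such that, with $p\le r$ meaning $pq=r$ for some $q\in P$, any two elements of $P$ having a common upper bound in $P$ have a least common upper bound. A $P$-graph is a countable small category $\Lambda$ (identity morphisms $\Lambda^{(0)}$, range and source maps $r,s$, composite $\mu\nu$ defined when $s(\mu)=r(\nu)$) with a functor $d:\Lambda\to P$ satisfying unique factorisation: whenever $d(\lambda)=pq$ with $p,q\in P$ there are unique $\mu,\nu\in\Lambda$ with $\lambda=\mu\nu$, $d(\mu)=p$, $d(\nu)=q$. Write $\lambda\Lambda=\{\lambda\mu:\mu\in\Lambda,\ s(\lambda)=r(\mu)\}$ and $\mu\preceq\lambda$ if $\lambda=\mu\nu$ for some $\nu\in\Lambda$. $\Lambda$ is finitely aligned at $(\mu,\nu)$ if there is a finite (possibly empty) $J\subseteq\Lambda$ with $\mu\Lambda\cap\nu\Lambda=\bigcup_{\lambda\in J}\lambda\Lambda$; $\Lambda$ is finitely aligned at $\lambda$ if it is finitely aligned at $(\mu,\nu)$ for all $\mu\in\lambda\Lambda$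 and $\nu\in\Lambda$; $\mathrm{FA}(\Lambda)$ is the set of $\lambda\in\Lambda$ at which $\Lambda$ is finitely aligned. The power set $\mathcal{P}(\Lambda)$ carries the product topology from its identification with $\prod_{\lambda\in\Lambda}\{0,1\}$ (each factor discrete); a basis is given by the sets $\{x\subseteq\Lambda: K_1\subseteq x\subseteq\Lambda\setminus K_2\}$ for finite $K_1,K_2\subseteq\Lambda$. Subsets of $\mathcal{P}(\Lambda)$ carry the subspace topology. A filter is a nonempty $x\subseteq\Lambda$ that is hereditary ($\lambda\preceq\mu\in x$ implies $\lambda\in x$) and directed ($\mu,\nu\in x$ implies there is $\lambda\in x$ with $\mu,\nu\preceq\lambda$); $\mathcal{F}(\Lambda)$ is the set of filters and $\mathcal{U}(\Lambda)$ the set of ultrafilters (filters maximal under inclusion). The path space is $\mathcal{X}(\Lambda)=\{x\in\mathcal{F}(\Lambda): x\cap\mathrm{FA}(\Lambda)\neq\emptyset\}$, and the boundary-path space $\partial\mathcal{X}(\Lambda)$ is the closure of $\mathcal{U}(\Lambda)\cap\mathcal{X}(\Lambda)$ in $\mathcal{X}(\Lambda)$. *)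

(* Defs.v *)
From HB Require Import structures.
From mathcomp Require Import all_boot all_order all_algebra.
From mathcomp Require Import monoid.
From mathcomp Require Import all_classical all_reals all_analysis.

Set Implicit Arguments.
Unset Strict Implicit.
Unset Printing Implicit Defensive.

Local Open Scope classical_set_scope.

Section WQLO.
Variable Q : groupType.

Definition wq_le (P : set Q) (p r : Q) : Prop :=
  exists2 q, P q & monoid.mul p q = r.

Definition is_WQLO (P : set Q) : Prop :=
  [/\ P monoid.one,
      (forall p q, P p -> P q -> P (monoid.mul p q)),
      (forall p, P p -> P (monoid.inv p) -> p = monoid.one) &
      (forall p q, P p -> P q ->
         (exists r, [/\ P r, wq_le P p r & wq_le P q r]) ->
         exists l, [/\ P l, wq_le P p l, wq_le P q l &
                     forall r, P r -> wq_le P p r -> wq_le P q r -> wq_le P l r])].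
End WQLO.

(** Lambda is the type of morphisms, [pg_obj]
    the set Lambda^(0) of identity morphisms, [pg_comp m n] the composite
    (only meaningful when [pg_s m = pg_r n]). *)
Record PGraph (Q : groupType) (P : set Q) (Λ : Type) := {
  pg_obj : set Λ;
  pg_r : Λ -> Λ;
  pg_s : Λ -> Λ;
  pg_comp : Λ -> Λ -> Λ;
  pg_d : Λ -> Q;
  pg_countable : countable [set: Λ];
  pg_obj_r : forall l, pg_obj (pg_r l);
  pg_obj_s : forall l, pg_obj (pg_s l);
  pg_obj_id : forall v, pg_obj v -> pg_r v = v /\ pg_s v = v;
  pg_comp_r : forall m n, pg_s m = pg_r n -> pg_r (pg_comp m n) = pg_r m;
  pg_comp_s : forall m n, pg_s m = pg_r n -> pg_s (pg_comp m n) = pg_s n;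
  pg_id_l : forall l, pg_comp (pg_r l) l = l;
  pg_id_r : forall l, pg_comp l (pg_s l) = l;
  pg_assoc : forall a b c, pg_s a = pg_r b -> pg_s b = pg_r c ->
     pg_comp (pg_comp a b) c = pg_comp a (pg_comp b c);
  pg_d_P : forall l, P (pg_d l);
  pg_d_obj : forall v, pg_obj v -> pg_d v = monoid.one;
  pg_d_comp : forall m n, pg_s m = pg_r n ->
     pg_d (pg_comp m n) = monoid.mul (pg_d m) (pg_d n);
  pg_fact : forall l p q, P p -> P q -> pg_d l = monoid.mul p q ->
     exists m n, [/\ pg_s m = pg_r n, l = pg_comp m n, pg_d m = p, pg_d n = q &
       forall m' n', pg_s m' = pg_r n' -> l = pg_comp m' n' -> pg_d m' = p ->
                     pg_d n' = q -> m' = m /\ n' = n]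
}.

Section PathSpaces.
Variables (Q : groupType) (P : set Q) (Λ : Type) (G : PGraph P Λ).

Definition pg_ext (l : Λ) : set Λ :=
  [set x | exists m, pg_s G l = pg_r G m /\ x = pg_comp G l m].

Definition pg_prec (m l : Λ) : Prop :=
  exists n, pg_s G m = pg_r G n /\ l = pg_comp G m n.

Definition fin_aligned2 (m n : Λ) : Prop :=
  exists J : set Λ, finite_set J /\
    pg_ext m `&` pg_ext n = \bigcup_(l in J) pg_ext l.

Definition fin_aligned_at (l : Λ) : Prop :=
  forall m n, pg_ext l m -> fin_aligned2 m n.

Definition FA : set Λ := [set l | fin_aligned_at l].

(* The power set P(Lambda), identified with prod_{Lambda} {0,1},
   with the product (pointwise) topology; bool carries the discrete topology. *)
Definition PowSet := {ptws Λ -> bool}.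

Definition is_pfilter (x : PowSet) : Prop :=
  [/\ exists l, x l,
      (forall l m, pg_prec l m -> x m -> x l) &
      (forall m n, x m -> x n -> exists2 l, x l & pg_prec m l /\ pg_prec n l)].

Definition FSp : set PowSet := [set x | is_pfilter x].

Definition USp : set PowSet :=
  [set x | is_pfilter x /\
     forall y : PowSet, is_pfilter y -> (forall l, x l -> y l) -> y = x].

Definition XSp : set PowSet := [set x | FSp x /\ exists l, x l /\ FA l].

Definition BdrySp : set PowSet :=
  set_val @` closure [set x : set_type XSp | USp (set_val x)].

End PathSpaces.

Definition countable_compact_basis (T : topologicalType) : Prop :=
  exists2 B : set (set T), countable B & basis B /\ B `<=` compact.

(* Main.v *)
Require Import Defs.
From HB Require Import structures.
From mathcomp Require Import all_boot all_order all_algebra.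
From mathcomp Require Import monoid.
From mathcomp Require Import all_classical all_reals all_analysis.
Set Implicit Arguments. Unset Strict Implicit.
Local Open Scope classical_set_scope.

Section Sub.
Variables (T : topologicalType) (A : set T).

Lemma sub_open (V : set T) : open V -> open (set_val @^-1` V : set (set_type A)).
Proof. by move=> oV; exists V. Qed.

Lemma sub_nbhs (x : set_type A) (N : set (set_type A)) : nbhs x N ->
  exists V : set T, [/\ open V, V (set_val x) & set_val @^-1` V `<=` N].
Proof.
rewrite nbhsE; move=> [W [[V oV <-] Vx] WN].
by exists V; split.
Qed.

Lemma sub_hausdorff : hausdorff_space T -> hausdorff_space (set_type A).
Proof.
rewrite !open_hausdorff => hT x y xy.
have vxy : set_val x != set_val y.
  by apply: contra xy => /eqP h; apply/eqP; apply: val_inj.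
have [[U V] /= [Ux Vy] [oU oV /eqP UV]] := hT _ _ vxy.
exists (set_val @^-1` U, set_val @^-1` V) => /=.
  by split; rewrite inE /=; [move: Ux|move: Vy]; rewrite inE.
split; [exact: sub_open|exact: sub_open|].
apply/eqP; rewrite -subset0 => z [Uz Vz].
have : (U `&` V) (set_val z) by split.
by rewrite UV.
Qed.

Lemma sub_compact (K : set T) : K `<=` A -> compact K ->
  compact (set_val @^-1` K : set (set_type A)).
Proof.
move=> KA cK.
have [->|/set0P [k Kk]] := eqVneq K set0.
  by rewrite preimage_set0; exact: compact0.
pose e0 : set_type A := exist _ k (mem_set (KA _ Kk)).
pose g (x : T) : set_type A :=
  if pselect (A x) is left h then exist _ x (mem_set h) else e0.
have gval z : g (set_val z) = z.
  rewrite /g; case: pselect => h; first by apply: val_inj.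
  by exfalso; apply: h; exact: set_valP.
have gK x : A x -> set_val (g x) = x.
  by move=> Ax; rewrite /g; case: pselect.
have cg : {within A, continuous g}.
  apply/subspace_sigL_continuousP.
  have -> : sigL A g = id by apply: funext => z; rewrite /sigL /= gval.
  by move=> z.
have -> : set_val @^-1` K = g @` K.
  apply/seteqP; split => [z Kz|_ [x Kx <-]].
    by exists (set_val z) => //; rewrite gval.
  by rewrite /= gK //; exact (KA _ Kx).
apply: continuous_compact => //.
exact (continuous_subspaceW KA cg).
Qed.
End Sub.
Lemma pow_compact (Λ : Type) : compact [set: PowSet Λ].
Proof.
have := @tychonoff {classic Λ} (fun _ => bool) (fun _ => setT) (fun _ => bool_compact).
by congr compact; apply/seteqP; split.
Qed.
Lemma pow_hausdorff (Λ : Type) : hausdorff_space (PowSet Λ).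
Proof.
exact: (@hausdorff_product {classic Λ} (fun _ => bool) (fun _ => discrete_hausdorff)).
Qed.
Lemma val_cont (T : topologicalType) (A : set T) : continuous (set_val : set_type A -> T).
Proof. exact: (@initial_continuous (set_type A) T set_val). Qed.
Section S.
Variable Λ : Type.
Definition agree (y : PowSet Λ) (F : set Λ) : set (PowSet Λ) :=
  [set z | forall l, F l -> z l = y l].

Lemma nbhsN (y : PowSet Λ) (S : set (PowSet Λ)) : nbhs y S ->
  exists2 F, finite_set F & agree y F `<=` S.
Proof.
pose Fy := filter_from [set F : set Λ | finite_set F] (agree y).
have FF : Filter Fy.
  apply: filter_from_filter; first by exists set0; exact: finite_set0.
  move=> A B fA fB; exists (A `|` B); first by rewrite /= finite_setU; split.
  by move=> z az; split => l hl; apply: az; [left|right].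
suff : Fy --> y by move=> /(_ S) h /h [F fF sF]; exists F.
have := @cvg_sup (PowSet Λ) Λ (fun i => Topological.class (initial_topology (fun f : PowSet Λ => f i))) Fy y FF.
move=> [_ ]; apply.
move=> i A; change (nbhs (y : initial_topology (fun f : PowSet Λ => f i)) A -> nbhs Fy A); rewrite nbhsE /=.
move=> [B [[V oV <-] By] BA].
exists [set i]; first exact: finite_set1.
move=> z /= hz; apply: BA => /=; rewrite hz //.
Qed.
Lemma nbhs1 (y : PowSet Λ) (l : Λ) : nbhs y [set z : PowSet Λ | z l = y l].
Proof.
have := @proj_continuous {classic Λ} (fun _ => bool) l y [set y l].
apply.
by apply: discrete_set1.
Qed.

Lemma nbhsF (y : PowSet Λ) (F : set Λ) : finite_set F ->
  nbhs y (agree y F).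
Proof.
move=> /(@finite_seqP {classic Λ}) [s ->].
elim: s => [|a s IH].
  by apply: filterS filterT => z _ l /=.
apply: filterS (filterI (nbhs1 y a) IH).
move=> z [za zs] l /=; rewrite inE => /orP [/eqP -> //|ls].
by apply: zs.
Qed.
End S.
Section G.
Variables (Q : groupType) (P : set Q) (Λ : Type) (G : PGraph P Λ).

Lemma prec_refl l : pg_prec G l l.
Proof.
exists (pg_s G l); split; last by rewrite pg_id_r.
by have [-> _] := pg_obj_id (pg_obj_s G l).
Qed.

Lemma prec_trans a b c : pg_prec G a b -> pg_prec G b c -> pg_prec G a c.
Proof.
move=> [m [sam ->]] [n [sbn ->]].
have smn : pg_s G m = pg_r G n by rewrite -sbn pg_comp_s.
exists (pg_comp G m n); split; first by rewrite pg_comp_r.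
by rewrite pg_assoc.
Qed.

Lemma FA_ext l m : FA G l -> pg_prec G l m -> FA G m.
Proof.
move=> fal lm a b ma; apply: fal; exact: prec_trans lm ma.
Qed.

Lemma filter_hered (x : PowSet Λ) l m : FSp G x -> pg_prec G l m -> x m -> x l.
Proof. by move=> [_ h _]; apply: h. Qed.

Definition Oset (mu : Λ) (Fm : set Λ) : set (PowSet Λ) :=
  [set y | FSp G y /\ y mu /\ forall nu, Fm nu -> ~ y nu].

Lemma Oset_closed mu Fm : FA G mu -> closed (Oset mu Fm).
Proof.
move=> fam y cly.
have ag F : finite_set F -> exists z, Oset mu Fm z /\ agree y F z.
  move=> fF; have [z [Oz az]] := cly _ (nbhsF y fF); by exists z.
have ymu : y mu.
  have [z [[_ [zmu _]] az]] := ag _ (finite_set1 mu).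
  by rewrite -(az mu).
have yFm : forall nu, Fm nu -> ~ y nu.
  move=> nu Fnu; have [z [[_ [_ zF]] az]] := ag _ (finite_set1 nu).
  by rewrite -(az nu) //; apply: zF.
have hered : forall l m, pg_prec G l m -> y m -> y l.
  move=> l m lm ym.
  have fF : finite_set ([set l] `|` [set m]) by rewrite finite_setU; split; exact: finite_set1.
  have [z [[zF _] az]] := ag _ fF.
  rewrite -(az l); last by left.
  apply: (filter_hered zF lm); rewrite (az m) //; by right.
have step : forall a b, pg_ext G mu a -> y a -> y b ->
    exists j, [/\ y j, pg_prec G a j & pg_prec G b j].
  move=> a b mua ya yb.
  have [J [fJ eqJ]] := fam a b mua.
  have fF : finite_set ([set a] `|` ([set b] `|` J)).
    by rewrite !finite_setU; split; [exact: finite_set1|split; [exact: finite_set1|]].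
  have [z [[zF _] az]] := ag _ fF.
  have za : z a by rewrite (az a) //; left.
  have zb : z b by rewrite (az b) //; right; left.
  case: zF => _ zh zd.
  have [l zl [al bl]] := zd a b za zb.
  have : (pg_ext G a `&` pg_ext G b) l by split.
  rewrite eqJ => -[j Jj jl].
  have yj : y j by rewrite -(az j); [apply: zh jl zl|right; right].
  have : (\bigcup_(l in J) pg_ext G l) j by exists j => //; exact: prec_refl.
  by rewrite -eqJ => -[aj bj]; exists j.
split; last by split.
split; [by exists mu|exact: hered|].
move=> m n ym yn.
  have [j1 [yj1 muj1 mj1]] := step mu m (prec_refl mu) ymu ym.
  have [j2 [yj2 muj2 nj2]] := step mu n (prec_refl mu) ymu yn.
  have [j [yj j1j j2j]] := step j1 j2 muj1 yj1 yj2.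
  exists j => //; split; [exact: prec_trans mj1 j1j|exact: prec_trans nj2 j2j].
Qed.

Lemma UB (X : PowSet Λ) lam S : FSp G X -> X lam -> finite_set S ->
  (forall l, S l -> X l) ->
  exists mu, [/\ X mu, pg_prec G lam mu & forall l, S l -> pg_prec G l mu].
Proof.
move=> FX Xl /(@finite_seqP {classic Λ}) [s ->] {S}.
elim: s => [|a s IH] sub.
  by exists lam; split; [by []|exact: prec_refl|move=> l /=; rewrite inE].
have [|mu [Xmu lmu smu]] := IH.
  by move=> l /= ls; apply: sub; rewrite /= inE ls orbT.
have Xa : X a by apply: sub; rewrite /= inE eqxx.
case: FX => _ _ dir.
have [j Xj [muj aj]] := dir mu a Xmu Xa.
exists j; split => //; first exact: prec_trans lmu muj.
move=> l /=; rewrite inE => /orP [/eqP -> //|ls].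
exact: prec_trans (smu l ls) muj.
Qed.

Definition Oprime (mu : Λ) (Fm : set Λ) : set (PowSet Λ) :=
  [set y | y mu /\ forall nu, Fm nu -> ~ y nu].

Lemma Oprime_open mu Fm : finite_set Fm -> open (Oprime mu Fm).
Proof.
move=> fFm; rewrite openE => y [ymu yF].
have fF : finite_set ([set mu] `|` Fm) by rewrite finite_setU; split => //; exact: finite_set1.
apply: filterS (nbhsF y fF) => z az; split.
  by rewrite (az mu) //; left.
by move=> nu Fnu; rewrite (az nu); [exact: yF|right].
Qed.

Lemma basis_gen (A : set (PowSet Λ)) : A `<=` XSp G ->
  (forall mu Fm, FA G mu -> finite_set Fm -> compact (A `&` Oprime mu Fm)) ->
  countable_compact_basis (set_type A).
Proof.
move=> AX hc.
pose I := FA G `*` [set Fm : set Λ | Fm `<=` setT /\ finite_set Fm].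
pose B := [set (set_val @^-1` Oprime p.1 p.2 : set (set_type A)) | p in I].
exists B; last split.
- apply: sub_countable (card_image_le _ _) _.
  apply: countableX.
    apply: sub_countable (pg_countable G).
    exact: subset_card_le.
  exact: countable_finite_subset (pg_countable G).
- split.
    move=> _ [[mu Fm] [/= _ [_ fFm]] <-].
    exact/sub_open/Oprime_open.
  move=> x N /sub_nbhs [V [oV Vx VN]].
  have : nbhs (set_val x) V by move: oV; rewrite openE => /(_ _ Vx).
  move=> /nbhsN [F fF FV].
  have [FX [lam [Xlam FAlam]]] := AX _ (set_valP x).
  have fFp : finite_set [set l | F l /\ set_val x l].
    by apply: sub_finite_set fF => l [].
  have fFm : finite_set [set l | F l /\ ~ set_val x l].
    by apply: sub_finite_set fF => l [].
  have [mu [Xmu lammu Fpmu]] := UB FX Xlam fFp (fun l => @proj2 _ _).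
  exists (set_val @^-1` Oprime mu [set l | F l /\ ~ set_val x l]).
    split; last by split => // nu [].
    exists (mu, [set l | F l /\ ~ set_val x l]) => //.
    by split => //=; exact: FA_ext FAlam lammu.
  move=> z [zmu zF]; apply: VN; apply: FV => l Fl /=.
  have [FZ _] := AX _ (set_valP z).
  have [Xl|nXl] := boolP (set_val x l).
    by apply: (filter_hered FZ (Fpmu l (conj Fl Xl))).
  by apply/negbTE/negP => zl; apply: (zF l) => //; split => //; apply/negP.
- move=> _ [[mu Fm] [/= FAmu [_ fFm]] <-].
  have -> : set_val @^-1` Oprime mu Fm = set_val @^-1` (A `&` Oprime mu Fm) :> set (set_type A).
    apply/seteqP; split => z /=; last by move=> [].
    by move=> Oz; split => //; exact: set_valP.
  apply: sub_compact; first by move=> ? [].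
  exact: hc.
Qed.

End G.

Theorem theorem4p9 (Q : groupType) (P : set Q) (Λ : Type) (G : PGraph P Λ) :
  is_WQLO P ->
  FA G !=set0 ->
  [/\ hausdorff_space (set_type (XSp G)),
      countable_compact_basis (set_type (XSp G)),
      hausdorff_space (set_type (BdrySp G)),
      countable_compact_basis (set_type (BdrySp G)) &
      open [set x : set_type (FSp G) | XSp G (set_val x)]].
Proof.
move=> _ _.
have hcX : forall mu Fm, FA G mu -> finite_set Fm ->
    compact (XSp G `&` Oprime mu Fm).
  move=> mu Fm FAmu fFm.
  have -> : XSp G `&` Oprime mu Fm = Oset G mu Fm.
    apply/seteqP; split => y.
      by move=> [[Fy _] [ymu yF]]; split.
    by move=> [Fy [ymu yF]]; split => //; split => //; exists mu.
  by apply: (subclosed_compact (Oset_closed (Fm:=Fm) FAmu) (@pow_compact Λ)).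
split.
- exact/sub_hausdorff/pow_hausdorff.
- by apply: basis_gen; [move=> ? | exact: hcX].
- exact/sub_hausdorff/pow_hausdorff.
- apply: basis_gen.
    by move=> _ [z _ <-]; exact: set_valP.
  move=> mu Fm FAmu fFm.
  set S := [set x : set_type (XSp G) | USp G (set_val x)].
  have -> : BdrySp G `&` Oprime mu Fm =
      set_val @` (closure S `&` set_val @^-1` (XSp G `&` Oprime mu Fm)).
    apply/seteqP; split.
      by move=> _ [[z cz <-] Oz]; exists z => //; split => //; split => //; exact: set_valP.
    by move=> _ [z [cz [_ Oz]] <-]; split => //; exists z.
  apply: continuous_compact.
    exact/continuous_subspaceT/val_cont.
  rewrite setIC; apply: compact_closedI; last exact: closed_closure.
  by apply: sub_compact; [move=> ? []|exact: hcX].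
- have -> : [set x : set_type (FSp G) | XSp G (set_val x)] =
      set_val @^-1` [set y : PowSet Λ | exists l, y l /\ FA G l].
    apply/seteqP; split => x /=; first by move=> [].
    by move=> h; split => //; exact: set_valP.
  apply: sub_open; rewrite openE => y [l [yl FAl]].
  apply: filterS (nbhs1 y l) => z /= zl; exists l; split => //; by rewrite zl.
Qed.
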